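(* Let $U\in\mathbb R^{\hat D\times\hat D}$, let $D_{t+1},\dots,D_T$ be diagonal $\hat D\times\hat D$ matrices, let $\alpha\ge0$, $\beta>0$, and set $m=\max_k\|U^\top D_{k+1}\|_2$. Suppose $\frac{\alpha}{\beta}m<1$. Then the matrix $M(U)=\prod_{k=t}^{T-1}(\alpha U^\top D_{k+1}+\beta I)$ has condition number $$\kappa_{M(U)}\le\frac{\big(1+\frac{\alpha}{\beta}m\big)^{T-t}}{\big(1-\frac{\alpha}{\beta}m\big)^{T-t}}.$$ In particular, if $\beta=1-\alpha$ and $\alpha=\frac{1}{T m}$ (with $Tm>1$ large enough that $\frac{\alpha}{\beta}m<1$), then $\kappa_{M(U)}=O(1)$ uniformly in $T$.
   Context: The condition number of an invertible matrix $A$ is $\kappa_A=\|A\|_2\,\|A^{-1}\|_2$. This product appears in the FastRNN gradients, where $D_k=\mathrm{diag}(\sigma'(Wx_k+Uh_{k-1}))$. *)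

(* Defs.v *)
(* real matrices over Stdlib R, represented as functions
   nat -> nat -> R of which only the n x n block (indices < n) matters. *)
From Stdlib Require Import Reals Lra List Classical ClassicalEpsilon.
Import ListNotations.
Open Scope R_scope.

Definition mat := nat -> nat -> R.
Definition vec := nat -> R.

Definition rsum (n : nat) (f : nat -> R) : R :=
  fold_right Rplus 0 (map f (seq 0 n)).

Definition mmul (n : nat) (A B : mat) : mat :=
  fun i j => rsum n (fun k => A i k * B k j).
Definition madd (A B : mat) : mat := fun i j => A i j + B i j.
Definition mscale (a : R) (A : mat) : mat := fun i j => a * A i j.
Definition mtr (A : mat) : mat := fun i j => A j i.
Definition mid : mat := fun i j => if Nat.eqb i j then 1 else 0.

Definition is_diag (n : nat) (A : mat) : Prop :=
  forall i j, (i < n)%nat -> (j < n)%nat -> i <> j -> A i j = 0.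

Definition mvec (n : nat) (A : mat) (x : vec) : vec :=
  fun i => rsum n (fun j => A i j * x j).
Definition vnorm (n : nat) (x : vec) : R := sqrt (rsum n (fun i => x i ^ 2)).

(* spectral norm ||A||_2 = sup { ||Ax|| : ||x|| <= 1 } (the least upper bound,
   which always exists; chosen by classical epsilon) *)
Definition opnorm_set (n : nat) (A : mat) : R -> Prop :=
  fun r => exists x : vec, vnorm n x <= 1 /\ r = vnorm n (mvec n A x).
Definition opnorm (n : nat) (A : mat) : R :=
  epsilon (inhabits 0) (fun c => is_lub (opnorm_set n A) c).

Definition is_inverse (n : nat) (A B : mat) : Prop :=
  forall i j, (i < n)%nat -> (j < n)%nat ->
    mmul n A B i j = mid i j /\ mmul n B A i j = mid i j.
Definition invertible (n : nat) (A : mat) : Prop := exists B, is_inverse n A B.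
Definition minv (n : nat) (A : mat) : mat :=
  epsilon (inhabits mid) (fun B => is_inverse n A B).

Definition cond (n : nat) (A : mat) : R := opnorm n A * opnorm n (minv n A).

(* ordered product F t * F (t+1) * ... * F (T-1)  (identity if T <= t) *)
Definition mprod (n : nat) (F : nat -> mat) (t T : nat) : mat :=
  fold_right (fun k acc => mmul n (F k) acc) mid (seq t (T - t)).

Definition factor (n : nat) (alpha beta : R) (U : mat) (D : nat -> mat) (k : nat) : mat :=
  madd (mscale alpha (mmul n (mtr U) (D (S k)))) (mscale beta mid).

Definition Mmat (n : nat) (alpha beta : R) (U : mat) (D : nat -> mat) (t T : nat) : mat :=
  mprod n (factor n alpha beta U D) t T.

(* m = max_{t <= k <= T-1} ||U^T D_{k+1}||_2  (0 for an empty range;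
   norms are nonnegative so this is the max otherwise) *)
Definition mmax (n : nat) (U : mat) (D : nat -> mat) (t T : nat) : R :=
  fold_right Rmax 0 (map (fun k => opnorm n (mmul n (mtr U) (D (S k)))) (seq t (T - t))).

(* Main.v *)
Require Import Defs.
From Stdlib Require Import Reals List Lra Lia ClassicalEpsilon.
Open Scope R_scope.

Lemma rsum_S n f : rsum (S n) f = rsum n f + f n.
Proof.
  unfold rsum. rewrite seq_S, map_app, fold_right_app. simpl.
  generalize (map f (seq 0 n)). intro l. induction l; simpl; lra.
Qed.

Lemma rsum_0 f : rsum 0 f = 0.
Proof. reflexivity. Qed.

Lemma rsum_ext n f g : (forall i, (i < n)%nat -> f i = g i) -> rsum n f = rsum n g.
Proof.
  induction n; intros H; [reflexivity|].
  rewrite !rsum_S, IHn by (intros; apply H; lia). rewrite H by lia. reflexivity.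
Qed.

Lemma rsum_plus n f g : rsum n (fun i => f i + g i) = rsum n f + rsum n g.
Proof. induction n; [simpl; unfold rsum; simpl; lra|]. rewrite !rsum_S, IHn. lra. Qed.

Lemma rsum_scal n c f : rsum n (fun i => c * f i) = c * rsum n f.
Proof. induction n; [unfold rsum; simpl; lra|]. rewrite !rsum_S, IHn. lra. Qed.

Lemma rsum_le n f g : (forall i, (i < n)%nat -> f i <= g i) -> rsum n f <= rsum n g.
Proof.
  induction n; intros H; [unfold rsum; simpl; lra|].
  rewrite !rsum_S. assert (f n <= g n) by (apply H; lia).
  assert (rsum n f <= rsum n g) by (apply IHn; intros; apply H; lia). lra.
Qed.

Lemma rsum_nonneg n f : (forall i, (i < n)%nat -> 0 <= f i) -> 0 <= rsum n f.
Proof.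
  intros H. replace 0 with (rsum n (fun _ => 0)).
  - apply rsum_le; auto.
  - induction n; [reflexivity|]. rewrite rsum_S, IHn by (intros; apply H; lia). lra.
Qed.

Lemma rsum_zero n : rsum n (fun _ => 0) = 0.
Proof. induction n; [reflexivity|]. rewrite rsum_S, IHn. lra. Qed.

Lemma rsum_term n f j : (forall i, (i < n)%nat -> 0 <= f i) -> (j < n)%nat -> f j <= rsum n f.
Proof.
  induction n; intros H Hj; [lia|]. rewrite rsum_S.
  assert (0 <= rsum n f) by (apply rsum_nonneg; intros; apply H; lia).
  destruct (Nat.eq_dec j n) as [->|Hne].
  - lra.
  - assert (f j <= rsum n f) by (apply IHn; [intros; apply H; lia| lia]).
    assert (0 <= f n) by (apply H; lia). lra.
Qed.

Lemma rsum_swap n m (f : nat -> nat -> R) :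
  rsum n (fun i => rsum m (fun j => f i j)) = rsum m (fun j => rsum n (fun i => f i j)).
Proof.
  induction n.
  - rewrite rsum_0. symmetry. apply (rsum_zero m).
  - rewrite rsum_S, IHn. rewrite <- rsum_plus. apply rsum_ext. intros. rewrite rsum_S. reflexivity.
Qed.

Lemma rsum_delta n i x : (i < n)%nat -> rsum n (fun j => mid i j * x j) = x i.
Proof.
  induction n; intros Hi; [lia|]. rewrite rsum_S. unfold mid at 2.
  destruct (Nat.eqb_spec i n) as [->|Hne].
  - rewrite (rsum_ext n _ (fun _ => 0)). rewrite rsum_zero. lra.
    intros k Hk. unfold mid. destruct (Nat.eqb_spec n k); [lia|lra].
  - rewrite IHn by lia. lra.
Qed.

Lemma rsum_abs n f : Rabs (rsum n f) <= rsum n (fun i => Rabs (f i)).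
Proof.
  induction n; [unfold rsum; simpl; rewrite Rabs_R0; lra|].
  rewrite !rsum_S. eapply Rle_trans; [apply Rabs_triang|]. lra.
Qed.

Lemma cauchy_schwarz n u v :
  (rsum n (fun i => u i * v i))^2 <= rsum n (fun i => u i ^ 2) * rsum n (fun i => v i ^ 2).
Proof.
  set (a := rsum n (fun i => u i ^ 2)).
  set (b := rsum n (fun i => u i * v i)).
  set (c := rsum n (fun i => v i ^ 2)).
  assert (Hq : forall l, 0 <= a + 2 * l * b + l^2 * c).
  { intros l.
    assert (E : rsum n (fun i => (u i + l * v i)^2) = a + 2 * l * b + l^2 * c).
    { unfold a, b, c. rewrite <- !rsum_scal, <- !rsum_plus. apply rsum_ext. intros; ring. }
    rewrite <- E. apply rsum_nonneg. intros; apply pow2_ge_0. }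
  assert (Ha : 0 <= a) by (apply rsum_nonneg; intros; apply pow2_ge_0).
  assert (Hc : 0 <= c) by (apply rsum_nonneg; intros; apply pow2_ge_0).
  destruct (Rle_lt_or_eq_dec 0 c Hc) as [Hc'|Hc'].
  - specialize (Hq (- b / c)).
    assert (0 <= a - b^2/c) by (replace (a - b^2/c) with (a + 2 * (-b/c) * b + (-b/c)^2 * c) by (field; lra); auto).
    assert (b^2 / c <= a) by lra.
    apply Rmult_le_compat_r with (r := c) in H0; [|lra].
    replace (b^2/c*c) with (b^2) in H0 by (field; lra). lra.
  - rewrite <- Hc'. destruct (Req_dec b 0) as [Hb|Hb].
    + rewrite Hb. lra.
    + exfalso. specialize (Hq (-(a+1)/(2*b))). rewrite <- Hc' in Hq.
      replace (a + 2 * (- (a + 1) / (2 * b)) * b + (- (a + 1) / (2 * b)) ^ 2 * 0) with (-1) in Hq by (field; auto).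
      lra.
Qed.

Lemma vnorm_nonneg n x : 0 <= vnorm n x.
Proof. apply sqrt_pos. Qed.

Lemma vnorm_ext n x y : (forall i, (i < n)%nat -> x i = y i) -> vnorm n x = vnorm n y.
Proof. intros H. unfold vnorm. f_equal. apply rsum_ext. intros; rewrite H; auto. Qed.

Lemma vnorm_sq n x : vnorm n x ^ 2 = rsum n (fun i => x i ^ 2).
Proof. unfold vnorm. rewrite pow2_sqrt; auto. apply rsum_nonneg; intros; apply pow2_ge_0. Qed.

Lemma vnorm_scal n c x : vnorm n (fun i => c * x i) = Rabs c * vnorm n x.
Proof.
  unfold vnorm. rewrite (rsum_ext n _ (fun i => c^2 * x i ^ 2)) by (intros; ring).
  rewrite rsum_scal, sqrt_mult_alt by apply pow2_ge_0.
  rewrite <- sqrt_Rsqr_abs. unfold Rsqr. f_equal. f_equal. ring.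
Qed.

Lemma vnorm_comp n x j : (j < n)%nat -> Rabs (x j) <= vnorm n x.
Proof.
  intros Hj. rewrite <- sqrt_Rsqr_abs. unfold vnorm. apply sqrt_le_1_alt.
  unfold Rsqr. replace (x j * x j) with (x j ^ 2) by ring.
  apply (rsum_term n (fun i => x i ^ 2)); auto. intros; apply pow2_ge_0.
Qed.

Lemma vnorm_zero n x : vnorm n x = 0 -> forall j, (j < n)%nat -> x j = 0.
Proof.
  intros H j Hj. pose proof (vnorm_comp n x j Hj). rewrite H in H0.
  destruct (Req_dec (x j) 0) as [E|E]; [exact E|]. pose proof (Rabs_pos_lt (x j) E). lra.
Qed.

Lemma vnorm_triangle n x y : vnorm n (fun i => x i + y i) <= vnorm n x + vnorm n y.
Proof.
  pose proof (vnorm_nonneg n x). pose proof (vnorm_nonneg n y).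
  pose proof (vnorm_nonneg n (fun i => x i + y i)).
  apply Rsqr_incr_0_var; [|lra]. unfold Rsqr.
  replace (vnorm n (fun i => x i + y i) * vnorm n (fun i => x i + y i)) with (vnorm n (fun i => x i + y i) ^2) by ring.
  rewrite vnorm_sq.
  rewrite (rsum_ext n _ (fun i => x i ^ 2 + (2 * (x i * y i) + y i ^ 2))) by (intros; ring).
  rewrite !rsum_plus, rsum_scal, <- !vnorm_sq.
  pose proof (cauchy_schwarz n x y). rewrite <- !vnorm_sq in H2.
  set (b := rsum n (fun i => x i * y i)) in *.
  assert (b <= vnorm n x * vnorm n y).
  { apply Rsqr_incr_0_var; [|nra]. unfold Rsqr.
    destruct (Rle_dec 0 b); nra. }
  nra.
Qed.

Lemma mvec_ext n A x y : (forall i, (i < n)%nat -> x i = y i) -> forall i, mvec n A x i = mvec n A y i.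
Proof. intros H i. unfold mvec. apply rsum_ext. intros; rewrite H; auto. Qed.

Lemma mvec_mmul n A B x i : mvec n (mmul n A B) x i = mvec n A (mvec n B x) i.
Proof.
  unfold mvec, mmul.
  rewrite (rsum_ext n (fun j => rsum n (fun k => A i k * B k j) * x j)
                     (fun j => rsum n (fun k => A i k * B k j * x j))).
  2:{ intros. rewrite Rmult_comm, <- rsum_scal. apply rsum_ext. intros; ring. }
  rewrite rsum_swap. apply rsum_ext. intros k _.
  rewrite <- rsum_scal. apply rsum_ext. intros; ring.
Qed.

Lemma mvec_mid n x i : (i < n)%nat -> mvec n mid x i = x i.
Proof. intros; unfold mvec; apply rsum_delta; auto. Qed.

Lemma mvec_scalv n A c x i : mvec n A (fun j => c * x j) i = c * mvec n A x i.
Proof. unfold mvec. rewrite <- rsum_scal. apply rsum_ext. intros; ring. Qed.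

Lemma opnorm_set_bound n A : bound (opnorm_set n A).
Proof.
  exists (sqrt (rsum n (fun i => (rsum n (fun j => Rabs (A i j)))^2))).
  intros r [x [Hx ->]]. unfold vnorm. apply sqrt_le_1_alt. apply rsum_le. intros i Hi.
  assert (Hb : Rabs (mvec n A x i) <= rsum n (fun j => Rabs (A i j))).
  { eapply Rle_trans; [apply rsum_abs|]. apply rsum_le. intros j Hj.
    rewrite Rabs_mult. pose proof (vnorm_comp n x j Hj).
    pose proof (Rabs_pos (A i j)). pose proof (Rabs_pos (x j)). nra. }
  pose proof (Rabs_pos (mvec n A x i)).
  rewrite <- (pow2_abs (mvec n A x i)). apply pow_incr. lra.
Qed.

Lemma opnorm_lub n A : is_lub (opnorm_set n A) (opnorm n A).
Proof.
  unfold opnorm. apply epsilon_spec.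
  destruct (completeness (opnorm_set n A) (opnorm_set_bound n A)) as [m Hm].
  - exists (vnorm n (mvec n A (fun _ => 0))). exists (fun _ => 0). split; auto.
    unfold vnorm. rewrite (rsum_ext n _ (fun _ => 0)) by (intros; simpl; ring).
    rewrite rsum_zero, sqrt_0. lra.
  - exists m; auto.
Qed.

Lemma opnorm_nonneg n A : 0 <= opnorm n A.
Proof.
  destruct (opnorm_lub n A) as [Hub _]. eapply Rle_trans; [|apply Hub].
  2:{ exists (fun _ => 0). split; [|reflexivity].
      unfold vnorm. rewrite (rsum_ext n _ (fun _ => 0)) by (intros; simpl; ring).
      rewrite rsum_zero, sqrt_0. lra. }
  apply vnorm_nonneg.
Qed.

Lemma opnorm_bound n A x : vnorm n (mvec n A x) <= opnorm n A * vnorm n x.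
Proof.
  pose proof (vnorm_nonneg n x). pose proof (opnorm_nonneg n A).
  destruct (Rle_lt_or_eq_dec 0 (vnorm n x) H) as [Hp|Hz].
  - destruct (opnorm_lub n A) as [Hub _].
    set (y := fun j => / vnorm n x * x j).
    assert (Hy : vnorm n y = 1).
    { unfold y. rewrite vnorm_scal, Rabs_right by (left; apply Rinv_0_lt_compat; lra). field; lra. }
    assert (vnorm n (mvec n A y) <= opnorm n A).
    { apply Hub. exists y. split; [lra|reflexivity]. }
    assert (E : vnorm n (mvec n A y) = / vnorm n x * vnorm n (mvec n A x)).
    { unfold y. rewrite (vnorm_ext n _ (fun i => / vnorm n x * mvec n A x i)).
      - rewrite vnorm_scal, Rabs_right by (left; apply Rinv_0_lt_compat; lra). reflexivity.
      - intros; apply mvec_scalv. }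
    rewrite E in H1.
    apply Rmult_le_compat_l with (r := vnorm n x) in H1; [|lra].
    rewrite <- Rmult_assoc, Rinv_r in H1 by lra. lra.
  - rewrite <- Hz. rewrite (vnorm_ext n _ (fun _ => 0 * 1)).
    + rewrite vnorm_scal. unfold vnorm. rewrite Rabs_R0. lra.
    + intros i Hi. unfold mvec. rewrite (rsum_ext n _ (fun _ => 0)). rewrite rsum_zero; ring.
      intros j Hj. rewrite (vnorm_zero n x (eq_sym Hz) j Hj). ring.
Qed.

Lemma opnorm_le n A c : 0 <= c -> (forall x, vnorm n (mvec n A x) <= c * vnorm n x) -> opnorm n A <= c.
Proof.
  intros Hc H. destruct (opnorm_lub n A) as [_ Hl]. apply Hl.
  intros r [x [Hx ->]]. eapply Rle_trans; [apply H|]. nra.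
Qed.

Lemma Rmax_list_ge l a : In a l -> a <= fold_right Rmax 0 l.
Proof.
  induction l; simpl; [tauto|]. intros [->|Hin].
  - apply Rmax_l.
  - eapply Rle_trans; [apply IHl; auto|]. apply Rmax_r.
Qed.

Lemma Rmax_list_nonneg l : 0 <= fold_right Rmax 0 l.
Proof. induction l; simpl; [lra|]. eapply Rle_trans; [apply IHl|]. apply Rmax_r. Qed.

Lemma factor_bounds n alpha beta U D k m x :
  0 <= alpha -> 0 < beta ->
  opnorm n (mmul n (mtr U) (D (S k))) <= m ->
  (beta - alpha * m) * vnorm n x <= vnorm n (mvec n (factor n alpha beta U D k) x) /\
  vnorm n (mvec n (factor n alpha beta U D k) x) <= (beta + alpha * m) * vnorm n x.
Proof.
  intros Ha Hb Hm. set (A := mmul n (mtr U) (D (S k))) in *.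
  assert (E : forall i, (i < n)%nat -> mvec n (factor n alpha beta U D k) x i = alpha * mvec n A x i + beta * x i).
  { intros i Hi. unfold factor, mvec, madd, mscale.
    rewrite (rsum_ext n _ (fun j => alpha * (A i j * x j) + beta * (mid i j * x j))) by (intros; unfold A; ring).
    rewrite rsum_plus, !rsum_scal. fold (mvec n A x i). rewrite rsum_delta; auto. }
  pose proof (opnorm_bound n A x). pose proof (vnorm_nonneg n x).
  pose proof (opnorm_nonneg n A). pose proof (vnorm_nonneg n (mvec n A x)).
  assert (HAx : vnorm n (mvec n A x) <= m * vnorm n x) by nra.
  split.
  - assert (E2 : vnorm n (fun i => beta * x i) = vnorm n (fun i => mvec n (factor n alpha beta U D k) x i + (-alpha) * mvec n A x i)).
    { apply vnorm_ext. intros i Hi. rewrite E by auto. ring. }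
    rewrite vnorm_scal, Rabs_right in E2 by lra.
    pose proof (vnorm_triangle n (mvec n (factor n alpha beta U D k) x) (fun i => (-alpha) * mvec n A x i)).
    rewrite vnorm_scal, Rabs_left1 in H3 by lra. rewrite <- E2 in H3. nra.
  - rewrite (vnorm_ext n _ (fun i => alpha * mvec n A x i + beta * x i)) by auto.
    eapply Rle_trans; [apply vnorm_triangle|]. rewrite !vnorm_scal, !Rabs_right by lra. nra.
Qed.

Definition plist n (F : nat -> mat) (l : list nat) : mat :=
  fold_right (fun k acc => mmul n (F k) acc) mid l.

Lemma plist_bounds n F l a b :
  0 <= a -> 0 <= b ->
  (forall k, In k l -> forall y, b * vnorm n y <= vnorm n (mvec n (F k) y) /\ vnorm n (mvec n (F k) y) <= a * vnorm n y) ->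
  forall x, b ^ length l * vnorm n x <= vnorm n (mvec n (plist n F l) x) /\
            vnorm n (mvec n (plist n F l) x) <= a ^ length l * vnorm n x.
Proof.
  intros Ha Hb. induction l as [|k l IH]; intros H x.
  - simpl. rewrite (vnorm_ext n (mvec n mid x) x) by (intros; apply mvec_mid; auto). lra.
  - simpl. rewrite (vnorm_ext n (mvec n (mmul n (F k) (plist n F l)) x) (mvec n (F k) (mvec n (plist n F l) x))) by (intros; apply mvec_mmul).
    destruct (IH (fun k' Hk' => H k' (or_intror Hk')) x) as [H1 H2].
    destruct (H k (or_introl eq_refl) (mvec n (plist n F l) x)) as [H3 H4].
    pose proof (pow_le b (length l) Hb). pose proof (pow_le a (length l) Ha).
    pose proof (vnorm_nonneg n x).
    split; nra.
Qed.

Lemma part1 (inv_lemma : forall n M, (forall x : vec, (forall i, (i < n)%nat -> mvec n M x i = 0) ->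
      forall j, (j < n)%nat -> x j = 0) -> invertible n M) :
  forall (n t T : nat) (U : mat) (D : nat -> mat) (alpha beta : R),
      (forall k, (t < k <= T)%nat -> is_diag n (D k)) ->
      0 <= alpha -> 0 < beta ->
      alpha / beta * mmax n U D t T < 1 ->
      invertible n (Mmat n alpha beta U D t T) /\
      cond n (Mmat n alpha beta U D t T)
        <= (1 + alpha / beta * mmax n U D t T) ^ (T - t)
           / (1 - alpha / beta * mmax n U D t T) ^ (T - t).
Proof.
  intros n t T U D alpha beta _ Ha Hb Hr.
  set (m := mmax n U D t T) in *.
  assert (Hm0 : 0 <= m) by apply Rmax_list_nonneg.
  assert (Ham : alpha * m < beta).
  { apply Rmult_lt_compat_r with (r := beta) in Hr; auto.
    replace (alpha / beta * m * beta) with (alpha * m) in Hr by (field; lra). lra. }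
  set (M := Mmat n alpha beta U D t T).
  set (N := (T - t)%nat).
  assert (HB : forall x, (beta - alpha * m) ^ N * vnorm n x <= vnorm n (mvec n M x) /\
                         vnorm n (mvec n M x) <= (beta + alpha * m) ^ N * vnorm n x).
  { intros x. unfold M, Mmat, mprod, N.
    assert (Hk : forall k, In k (seq t (T - t)) -> forall y,
       (beta - alpha * m) * vnorm n y <= vnorm n (mvec n (factor n alpha beta U D k) y) /\
       vnorm n (mvec n (factor n alpha beta U D k) y) <= (beta + alpha * m) * vnorm n y).
    { intros k Hk y. apply factor_bounds; auto.
      unfold m, mmax. apply Rmax_list_ge. apply in_map_iff. exists k; auto. }
    pose proof (plist_bounds n (factor n alpha beta U D) (seq t (T - t)) (beta + alpha * m) (beta - alpha * m)
      ltac:(nra) ltac:(nra) Hk x) as HH.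
    rewrite length_seq in HH. exact HH. }
  assert (Hc : 0 < (beta - alpha * m) ^ N) by (apply pow_lt; lra).
  assert (Hinv : invertible n M).
  { apply inv_lemma. intros x Hx j Hj.
    destruct (HB x) as [H1 _].
    rewrite (vnorm_ext n (mvec n M x) (fun _ => 0 * 1)) in H1 by (intros; rewrite Hx; auto; ring).
    rewrite vnorm_scal, Rabs_R0 in H1. pose proof (vnorm_nonneg n x).
    apply (vnorm_zero n x); auto. nra. }
  split; [exact Hinv|].
  assert (HBinv : is_inverse n M (minv n M)) by (unfold minv; apply epsilon_spec; exact Hinv).
  assert (Hup : opnorm n M <= (beta + alpha * m) ^ N).
  { apply opnorm_le; [apply pow_le; nra|]. intros x; apply HB. }
  assert (Hlo : opnorm n (minv n M) <= / (beta - alpha * m) ^ N).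
  { apply opnorm_le; [left; apply Rinv_0_lt_compat; auto|]. intros y.
    destruct (HB (mvec n (minv n M) y)) as [H1 _].
    rewrite (vnorm_ext n (mvec n M (mvec n (minv n M) y)) y) in H1.
    - apply Rmult_le_compat_l with (r := / (beta - alpha * m) ^ N) in H1;
        [|left; apply Rinv_0_lt_compat; auto].
      rewrite <- Rmult_assoc, Rinv_l in H1 by lra. lra.
    - intros i Hi. rewrite <- mvec_mmul.
      unfold mvec. rewrite (rsum_ext n _ (fun j => mid i j * y j)).
      + apply rsum_delta; auto.
      + intros j Hj. destruct (HBinv i j Hi Hj) as [E _]. rewrite E. reflexivity. }
  unfold cond. fold M.
  eapply Rle_trans.
  { apply Rmult_le_compat; [apply opnorm_nonneg|apply opnorm_nonneg|exact Hup|exact Hlo]. }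
  fold N.
  replace (beta + alpha * m) with (beta * (1 + alpha / beta * m)) by (field; lra).
  replace (beta - alpha * m) with (beta * (1 - alpha / beta * m)) by (field; lra).
  rewrite !Rpow_mult_distr.
  assert (0 < beta ^ N) by (apply pow_lt; lra).
  assert (0 < (1 - alpha / beta * m) ^ N) by (apply pow_lt; lra).
  right. field. lra.
Qed.

Lemma exp_pow_nat x k : exp x ^ k = exp (INR k * x).
Proof.
  induction k. { simpl. rewrite Rmult_0_l, exp_0. reflexivity. }
  change (exp x ^ S k) with (exp x * exp x ^ k).
  rewrite IHk, <- exp_plus, S_INR. f_equal. ring.
Qed.

Lemma part2 (inv_lemma : forall n M, (forall x : vec, (forall i, (i < n)%nat -> mvec n M x i = 0) ->
      forall j, (j < n)%nat -> x j = 0) -> invertible n M) :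
  (forall m : R, 0 < m ->
     exists C T0 : R, forall (n t T : nat) (U : mat) (D : nat -> mat),
       (forall k, (t < k <= T)%nat -> is_diag n (D k)) ->
       mmax n U D t T = m ->
       T0 <= INR T ->
       1 < INR T * m ->
       let alpha := 1 / (INR T * m) in
       let beta := 1 - alpha in
       alpha / beta * m < 1 ->
       invertible n (Mmat n alpha beta U D t T) /\
       cond n (Mmat n alpha beta U D t T) <= C).
Proof.
  intros m Hm. exists (exp 8), (2 / m + 4).
  intros n t T U D Hd Hmm HT0 HTm alpha beta Hr.
  assert (Ha : 0 < alpha) by (subst alpha; apply Rdiv_lt_0_compat; lra).
  assert (Ha1 : alpha < 1).
  { subst alpha. apply Rmult_lt_reg_r with (r := INR T * m); [lra|].
    replace (1 / (INR T * m) * (INR T * m)) with 1 by (field; nra). lra. }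
  assert (Hb : 0 < beta) by (subst beta; lra).
  destruct (part1 inv_lemma n t T U D alpha beta Hd ltac:(lra) Hb ltac:(rewrite Hmm; exact Hr)) as [Hi Hc].
  split; [exact Hi|]. eapply Rle_trans; [exact Hc|]. rewrite Hmm.
  set (X := INR T) in *. set (r := alpha / beta * m) in *.
  assert (Hr0 : 0 <= r) by (subst r; apply Rmult_le_pos; [apply Rlt_le, Rdiv_lt_0_compat|]; lra).
  assert (Hre : r * (X * m - 1) = m) by (subst r beta alpha; field; split; nra).
  assert (HX4 : 4 <= X).
  { assert (0 <= 2 / m) by (apply Rlt_le, Rdiv_lt_0_compat; lra). lra. }
  assert (HXm : 2 <= X * m).
  { assert (2 / m <= X) by lra. apply Rmult_le_compat_r with (r := m) in H; [|lra].
    replace (2 / m * m) with 2 in H by (field; lra). lra. }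
  assert (Hrm : r <= m) by nra.
  assert (HrX : r * X <= 2) by nra.
  assert (Hr12 : r <= 1/2) by nra.
  set (q := (1 + r) / (1 - r)).
  assert (Eq : (1 + r) ^ (T - t) / (1 - r) ^ (T - t) = q ^ (T - t)).
  { subst q. unfold Rdiv. rewrite Rpow_mult_distr, pow_inv; try reflexivity; try lra. }
  rewrite Eq.
  assert (Hq1 : 1 <= q) by (subst q; apply Rmult_le_reg_r with (r := 1 - r); [lra|]; unfold Rdiv; rewrite Rmult_assoc, Rinv_l; lra).
  assert (Hq2 : q <= 1 + 8 / X).
  { assert (q <= 1 + 4 * r).
    { subst q. apply Rmult_le_reg_r with (r := 1 - r); [lra|]. unfold Rdiv; rewrite Rmult_assoc, Rinv_l by lra. nra. }
    assert (4 * r <= 8 / X).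
    { apply Rmult_le_reg_r with (r := X); [lra|]. replace (8 / X * X) with 8 by (field; lra). lra. }
    lra. }
  eapply Rle_trans; [apply Rle_pow with (n := T); [exact Hq1| lia]|].
  eapply Rle_trans; [apply pow_incr; split; [lra|exact Hq2]|].
  eapply Rle_trans; [apply pow_incr; split; [|apply exp_ineq1_le]|].
  { assert (0 <= 8 / X) by (apply Rlt_le, Rdiv_lt_0_compat; lra). lra. }
  rewrite exp_pow_nat. fold X. right. f_equal. field. lra.
Qed.

Module Bridge.
From HB Require Import structures.
From mathcomp Require Import all_boot all_order all_algebra.
From mathcomp Require Import Rstruct.
Import GRing.Theory.
Local Open Scope ring_scope.

Lemma rsum_big k (f : nat -> R) : rsum k f = \sum_(i < k) f i.
Proof.
elim: k => [|k IH]; first by rewrite big_ord0.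
by rewrite rsum_S big_ord_recr /= IH.
Qed.

Lemma inj_invertible (n : nat) (M : mat) :
  (forall x : vec, (forall i, (i < n)%coq_nat -> mvec n M x i = 0%R) ->
      forall j, (j < n)%coq_nat -> x j = 0%R) -> invertible n M.
Proof.
case: n M => [|n] M H.
  by exists mid => i j Hi; exfalso; lia.
pose A : 'M[R]_n.+1 := \matrix_(i, j) M i j.
have uA : A \in unitmx.
  rewrite unitmxE unitfE -det_tr; apply/negP => /det0P [v v0 vA].
  move/negP: v0; apply; apply/eqP/rowP => j.
  pose x : vec := fun j => v 0 (inord j).
  have Hx : forall i, (i < n.+1)%coq_nat -> mvec n.+1 M x i = 0%R.
    move=> i /ltP Hi.
    move/matrixP: vA => /(_ 0 (inord i)); rewrite !mxE => <-.
    rewrite /mvec rsum_big; apply: eq_bigr => k _.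
    by rewrite !mxE inordK // /x inord_val mulrC.
  have := H x Hx j (ltP (ltn_ord j)).
  by rewrite /x inord_val mxE.
exists (fun i j => invmx A (inord i) (inord j)) => i j /ltP Hi /ltP Hj.
have Hmid : mid i j = (1%:M : 'M[R]_n.+1) (inord i) (inord j).
  rewrite /mid mxE; case: (PeanoNat.Nat.eqb_spec i j) => [->|Hne].
    by rewrite eqxx.
  case: eqP => // /(congr1 val); rewrite /= !inordK // => E; by case: Hne.
rewrite Hmid; split.
  rewrite -(mulmxV uA) /mmul rsum_big mxE; apply: eq_bigr => k _.
  by rewrite mxE inordK // inord_val.
rewrite -(mulVmx uA) /mmul rsum_big mxE; apply: eq_bigr => k _.
by rewrite mxE inordK // inord_val.
Qed.
End Bridge.

Theorem mainTheorem7 :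
  (* main bound *)
  (forall (n t T : nat) (U : mat) (D : nat -> mat) (alpha beta : R),
      (forall k, (t < k <= T)%nat -> is_diag n (D k)) ->
      0 <= alpha -> 0 < beta ->
      alpha / beta * mmax n U D t T < 1 ->
      invertible n (Mmat n alpha beta U D t T) /\
      cond n (Mmat n alpha beta U D t T)
        <= (1 + alpha / beta * mmax n U D t T) ^ (T - t)
           / (1 - alpha / beta * mmax n U D t T) ^ (T - t))
  /\
  (* in particular: beta = 1 - alpha, alpha = 1/(T m): kappa = O(1) uniformly in T *)
  (forall m : R, 0 < m ->
     exists C T0 : R, forall (n t T : nat) (U : mat) (D : nat -> mat),
       (forall k, (t < k <= T)%nat -> is_diag n (D k)) ->
       mmax n U D t T = m ->
       T0 <= INR T ->
       1 < INR T * m ->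
       let alpha := 1 / (INR T * m) in
       let beta := 1 - alpha in
       alpha / beta * m < 1 ->
       invertible n (Mmat n alpha beta U D t T) /\
       cond n (Mmat n alpha beta U D t T) <= C).
Proof.
  split.
  - exact (part1 Bridge.inj_invertible).
  - exact (part2 Bridge.inj_invertible).
Qed.
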